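(* Let $\alpha\in(0,1)$. Let $\hat C_\alpha(X_{n+1})$ be the full conformal prediction region and $\tilde C_\alpha(X_{n+1})$ the upper approximate full conformal prediction region built from approximate scores $\tilde S_{D^y}$ and bounds $\tau_1(y),\dots,\tau_{n+1}(y)$ as described in the context. Then $\hat C_\alpha(X_{n+1})\subseteq \tilde C_\alpha(X_{n+1})$. Consequently, if $(X_1,Y_1),\dots,(X_{n+1},Y_{n+1})$ are exchangeable and the predictor $\hat f_D$ is invariant to permutations of the data in $D$, then $$\mathbb P\big[Y_{n+1}\in\tilde C_\alpha(X_{n+1})\big]\ \ge\ \mathbb P\big[Y_{n+1}\in \hat C_\alpha(X_{n+1})\big]\ \ge\ 1-\alpha .$$
   Context: Let $\mathcal X\subset\mathbb R^d$, $\mathcal Y\subset\mathbb R$. $D=\{(X_1,Y_1),\dots,(X_n,Y_n)\}$ are random variables with values in $\mathcal X\times\mathcal Y$ and $(X_{n+1},Y_{n+1})$ is a further random pair of which only $X_{n+1}$ is observed. For $y\in\mathcal Y$ let $D^y=\{(X_1,Y_1),\dots,(X_n,Y_n),(X_{n+1},y)\}$ and let $\hat f_{D^y}:\mathcal X\to\mathcal Y$ be a predictor trained on $D^y$. Given a non-conformity function $s:\mathcal Y\times\mathcal Y\to\mathbb R_+$, the non-conformity scores are $S_{D^y}(X_i,Y_i)=s(Y_i,\hat f_{D^y}(X_i))$ for $1\le i\le n$ and $S_{D^y}(X_{n+1},y)=s(y,\hat f_{D^y}(X_{n+1}))$. The full conformal p-value is $\hat\pi_D(X_{n+1},y)=\frac{1+\sum_{i=1}^n\mathbb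 1\{S_{D^y}(X_i,Y_i)\ge S_{D^y}(X_{n+1},y)\}}{n+1}$ and the full conformal prediction region is $\hat C_\alpha(X_{n+1})=\{y\in\mathcal Y:\hat\pi_D(X_{n+1},y)>\alpha\}$. Approximation scheme: for every $y\in\mathcal Y$ let $\tilde S_{D^y}(X_i,Y_i)$ ($1\le i\le n$) and $\tilde S_{D^y}(X_{n+1},y)$ be real numbers (approximate scores) and $0\le\tau_i(y)<\infty$ ($1\le i\le n+1$) be such that $|S_{D^y}(X_i,Y_i)-\tilde S_{D^y}(X_i,Y_i)|\le\tau_i(y)$ for $1\le i\le n$ and $|S_{D^y}(X_{n+1},y)-\tilde S_{D^y}(X_{n+1},y)|\le\tau_{n+1}(y)$. The upper approximate p-value is $\tilde\pi_D(X_{n+1},y)=\frac{1+\sum_{i=1}^n\mathbb 1\{\tilde S_{D^y}(X_i,Y_i)+\tau_i(y)\ge\tilde S_{D^y}(X_{n+1},y)-\tau_{n+1}(y)\}}{n+1}$ and the upper approximate full conformal region is $\tilde C_\alpha(X_{n+1})=\{y\in\mathcal Y:\tilde\pi_D(X_{n+1},y)>\alpha\}$. *)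

(* Defs.v *)
From HB Require Import structures.
From mathcomp Require Import all_boot all_order all_algebra all_fingroup.
From mathcomp Require Import all_classical all_reals all_analysis.

Set Implicit Arguments.
Unset Strict Implicit.
Unset Printing Implicit Defensive.

Import Order.TTheory GRing.Theory Num.Theory.
Local Open Scope classical_set_scope.
Local Open Scope ring_scope.

(* A data point (x, y) with x in R^d (represented as a d-tuple of reals,
   which carries the product Borel sigma-algebra) and y in R. *)
Definition datum (R : realType) (d : nat) := (d.-tuple R * R)%type.

Definition algo (R : realType) (d n : nat) :=
  (n.+1).-tuple (datum R d) -> d.-tuple R -> R.

Section Conformal.
Variables (R : realType) (d n : nat).
Variable s : R -> R -> R.
Variable A : algo R d n.

Definition augment (D : n.-tuple (datum R d)) (x : d.-tuple R) (y : R)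
  : (n.+1).-tuple (datum R d) := [tuple of rcons D (x, y)].

(* S_{D^y}(X_i,Y_i) for i = 1..n and S_{D^y}(X_{n+1},y) (index ord_max). *)
Definition score (D : n.-tuple (datum R d)) (x : d.-tuple R) (y : R)
  (i : 'I_n.+1) : R :=
  let Dy := augment D x y in s (tnth Dy i).2 (A Dy (tnth Dy i).1).

Definition first (i : 'I_n) : 'I_n.+1 := widen_ord (leqnSn n) i.

Definition pval (D : n.-tuple (datum R d)) (x : d.-tuple R) (y : R) : R :=
  (1 + #|[set i : 'I_n |
          score D x y ord_max <= score D x y (first i)]|%:R)
  / (n.+1)%:R.

Definition Chat (Yset : set R) (alpha : R) (D : n.-tuple (datum R d))
  (x : d.-tuple R) : set R :=
  [set y | Yset y /\ alpha < pval D x y].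

(* upper approximate p-value, from approximate scores St y i and bounds tau y i
   (index ord_max stands for n+1) *)
Definition pval_tilde (St tau : R -> 'I_n.+1 -> R) (y : R) : R :=
  (1 + #|[set i : 'I_n |
          St y ord_max - tau y ord_max <= St y (first i) + tau y (first i)]|%:R)
  / (n.+1)%:R.

Definition Ctilde (Yset : set R) (alpha : R) (St tau : R -> 'I_n.+1 -> R)
  : set R :=
  [set y | Yset y /\ alpha < pval_tilde St tau y].

Definition approx_valid (Yset : set R) (D : n.-tuple (datum R d))
  (x : d.-tuple R) (St tau : R -> 'I_n.+1 -> R) : Prop :=
  forall y, Yset y -> forall i : 'I_n.+1,
    0 <= tau y i /\ `|score D x y i - St y i| <= tau y i.

End Conformal.

Definition perm_invariant (R : realType) (d n : nat) (A : algo R d n) : Prop :=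
  forall (sigma : 'S_n.+1) (t : (n.+1).-tuple (datum R d)),
    A [tuple tnth t (sigma i) | i < n.+1] = A t.

Definition exchangeable (R : realType) (d n : nat) (dO : measure_display)
  (Omega : measurableType dO) (P : probability Omega R)
  (Z : 'I_n.+1 -> Omega -> datum R d) : Prop :=
  forall (sigma : 'S_n.+1) (B : set ((n.+1).-tuple (datum R d))),
    measurable B ->
    P ((fun w => [tuple Z (sigma i) w | i < n.+1]) @^-1` B)
    = P ((fun w => [tuple Z i w | i < n.+1]) @^-1` B).

(* Main.v *)
Require Import Defs.
From HB Require Import structures.
From mathcomp Require Import all_boot all_order all_algebra all_fingroup.
From mathcomp Require Import all_classical all_reals all_analysis.
From mathcomp Require Import lra zify.
From mathcomp Require Import measurable_realfun lebesgue_integral.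
Import Order.TTheory GRing.Theory Num.Theory.
Local Open Scope classical_set_scope.
Local Open Scope ring_scope.
Set Implicit Arguments.
Unset Strict Implicit.
Unset Printing Implicit Defensive.
Lemma memc (T : Type) (P : T -> bool) x : (x \in [set y | P y]) = P x.
Proof. by rewrite /in_mem /= /in_set asboolb. Qed.

Lemma card_set_sum m (P : pred 'I_m) : #|[set i | P i]| = (\sum_i (P i : nat))%N.
Proof.
rewrite -sum1_card big_mkcond /=; apply: eq_bigr => i _. rewrite memc.
by case: (P i).
Qed.

Lemma card_le m (P Q : pred 'I_m) : (forall i, P i -> Q i) ->
  (#|[set i | P i]| <= #|[set i | Q i]|)%N.
Proof.
move=> h; rewrite !card_set_sum; apply: leq_sum => i _.
by case: (boolP (P i)) => // /h ->.
Qed.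

Lemma det_part (R : realType) (d n : nat) (Yset : set R)
  (s : R -> R -> R) (A : algo R d n) (alpha : R)
  (D : n.-tuple (datum R d)) (x : d.-tuple R) (St tau : R -> 'I_n.+1 -> R) :
  approx_valid s A Yset D x St tau ->
  Chat s A Yset alpha D x `<=` Ctilde Yset alpha St tau.
Proof.
move=> hv y [Yy ha]; split => //; apply: (lt_le_trans ha).
rewrite /Defs.pval /pval_tilde ler_pM2r ?invr_gt0 ?ltr0Sn // lerD2l ler_nat.
apply: card_le => i hi.
have [_ h1] := hv y Yy ord_max; have [_ h2] := hv y Yy (first i).
move: h1 h2; rewrite !ler_distl => /andP[h1 h1'] /andP[h2 h2'].
lra.
Qed.

Lemma comb (R : realType) m (sc : 'I_m -> R) (k : R) : 0 <= k ->
  (#|[set j | (#|[set i | sc j <= sc i]|)%:R <= k]|)%:R <= k.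
Proof.
move=> k0.
pose Pj := fun j => (#|[set i | sc j <= sc i]|)%:R <= k.
case: (pickP Pj) => [j1 j1J|none].
  case: (arg_minP sc j1J) => j0 j0J hmin.
  apply: le_trans j0J; rewrite ler_nat; apply: card_le => i iJ.
  exact: hmin.
by rewrite card_set_sum big1 // => i _; move: (none i); rewrite /Pj => ->.
Qed.
Definition scf (R : realType) d n (s : R -> R -> R) (A : algo R d n)
  (t : (n.+1).-tuple (datum R d)) (j : 'I_n.+1) : R :=
  s (tnth t j).2 (A t (tnth t j).1).

Definition cnt (R : realType) d n (s : R -> R -> R) (A : algo R d n)
  (t : (n.+1).-tuple (datum R d)) (j : 'I_n.+1) : nat :=
  #|[set i | scf s A t j <= scf s A t i]|.

Lemma aug_tuple (R : realType) d n (f : 'I_n.+1 -> datum R d) :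
  augment [tuple f (first i) | i < n] (f ord_max).1 (f ord_max).2
  = [tuple f i | i < n.+1].
Proof.
apply: eq_from_tnth => i; rewrite tnth_mktuple /augment /= (tnth_nth (f i)) /=.
rewrite nth_rcons size_map size_enum_ord.
case: ltnP => hi.
  rewrite (nth_map (Ordinal hi)) ?size_enum_ord //; congr f.
  by apply: val_inj; rewrite /= nth_enum_ord.
have -> : i = ord_max by apply: val_inj => /=; have := ltn_ord i; lia.
by rewrite eqxx; case: (f ord_max).
Qed.

Lemma pval_cnt (R : realType) d n (s : R -> R -> R) (A : algo R d n)
  (f : 'I_n.+1 -> datum R d) :
  Defs.pval s A [tuple f (first i) | i < n] (f ord_max).1 (f ord_max).2
  = (cnt s A [tuple f i | i < n.+1] ord_max)%:R / (n.+1)%:R.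
Proof.
rewrite /Defs.pval /score aug_tuple /cnt !card_set_sum big_ord_recr /= lexx.
by rewrite natrD addrC.
Qed.
Lemma mscf (R : realType) d n (s : R -> R -> R) (A : algo R d n) j :
  measurable_fun setT
    (fun p : (n.+1).-tuple (datum R d) * d.-tuple R => A p.1 p.2) ->
  measurable_fun setT (fun p : R * R => s p.1 p.2) ->
  measurable_fun setT (fun t => scf s A t j).
Proof.
move=> mA ms.
apply: (measurableT_comp ms (f := fun p : R * R => s p.1 p.2)
  (g := fun t : (n.+1).-tuple (datum R d) => ((tnth t j).2, A t (tnth t j).1))).
apply: measurable_fun_pair.
  exact: measurableT_comp measurable_snd (measurable_tnth j).
apply: (measurableT_comp mA (f := fun p => A p.1 p.2)
  (g := fun t : (n.+1).-tuple (datum R d) => (t, (tnth t j).1))).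
apply: measurable_fun_pair => //.
exact: measurableT_comp measurable_fst (measurable_tnth j).
Qed.

Lemma mE (R : realType) d n (s : R -> R -> R) (A : algo R d n) j (k : R) :
  measurable_fun setT
    (fun p : (n.+1).-tuple (datum R d) * d.-tuple R => A p.1 p.2) ->
  measurable_fun setT (fun p : R * R => s p.1 p.2) ->
  measurable [set t | (cnt s A t j)%:R <= k].
Proof.
move=> mA ms.
have mf : measurable_fun setT (fun t => ((cnt s A t j)%:R : R)).
  have -> : (fun t => ((cnt s A t j)%:R : R)) =
    (fun t => \sum_(i <- index_enum 'I_n.+1)
       \1_[set t | scf s A t j <= scf s A t i] t).
    apply: funext => t; rewrite /cnt card_set_sum natr_sum.
    apply: eq_bigr => i _; rewrite indicE memc //.
  apply: measurable_sum => i; apply: measurable_realfun.measurable_indic.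
  have := measurable_realfun.measurable_fun_ler (mscf j mA ms) (mscf i mA ms) measurableT
    (ltac:(by []) : measurable [set true]).
  by rewrite setTI.
have := mf measurableT _ (measurable_itv `]-oo, k]); rewrite setTI.
congr measurable; apply/seteqP; split => t /=; rewrite in_itv //=.
Qed.
Lemma cnt_perm (R : realType) d n (s : R -> R -> R) (A : algo R d n)
  (sigma : 'S_n.+1) t m : perm_invariant A ->
  cnt s A [tuple tnth t (sigma i) | i < n.+1] m = cnt s A t (sigma m).
Proof.
move=> hA.
have hsc i : scf s A [tuple tnth t (sigma i) | i < n.+1] i = scf s A t (sigma i).
  by rewrite /scf hA tnth_mktuple.
rewrite /cnt !card_set_sum [RHS](reindex_inj (@perm_inj _ sigma)) /=.
by apply: eq_bigr => i _; rewrite !hsc.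
Qed.
Theorem lemma5 (R : realType) (d n : nat)
  (Xset : set (d.-tuple R)) (Yset : set R)
  (s : R -> R -> R) (A : algo R d n) (alpha : R) :
  (forall y yh : R, 0 <= s y yh) ->
  0 < alpha < 1 ->
  (forall (D : n.-tuple (datum R d)) (x : d.-tuple R)
          (St tau : R -> 'I_n.+1 -> R),
      approx_valid s A Yset D x St tau ->
      Chat s A Yset alpha D x `<=` Ctilde Yset alpha St tau)
  /\
  (forall (dO : measure_display) (Omega : measurableType dO)
          (P : probability Omega R)
          (X : 'I_n.+1 -> Omega -> d.-tuple R) (Y : 'I_n.+1 -> Omega -> R)
          (St tau : Omega -> R -> 'I_n.+1 -> R),
      (forall i, measurable_fun setT (X i)) ->
      (forall i, measurable_fun setT (Y i)) ->
      (forall i w, Xset (X i w) /\ Yset (Y i w)) ->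
      exchangeable P (fun i w => (X i w, Y i w)) ->
      perm_invariant A ->
      measurable_fun setT
        (fun p : (n.+1).-tuple (datum R d) * d.-tuple R => A p.1 p.2) ->
      measurable_fun setT (fun p : R * R => s p.1 p.2) ->
      (forall w, approx_valid s A Yset
                   [tuple (X (first i) w, Y (first i) w) | i < n]
                   (X ord_max w) (St w) (tau w)) ->
      measurable [set w | Ctilde Yset alpha (St w) (tau w) (Y ord_max w)] ->
      (P [set w | Chat s A Yset alpha
                    [tuple (X (first i) w, Y (first i) w) | i < n]
                    (X ord_max w) (Y ord_max w)]
       <= P [set w | Ctilde Yset alpha (St w) (tau w) (Y ord_max w)])%E
      /\
      ((1 - alpha)%:E
       <= P [set w | Chat s A Yset alpha
                       [tuple (X (first i) w, Y (first i) w) | i < n]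
                       (X ord_max w) (Y ord_max w)])%E).
Proof.
move=> s0 /andP[a0 a1]; split; first by move=> *; apply: det_part.
move=> dO Omega P X Y St tau mX mY hXY hex hA mA ms hv mCt.
pose Z := fun w => [tuple (X i w, Y i w) | i < n.+1].
have mZ : measurable_fun setT Z.
  apply/measurable_fun_tnthP => i.
  rewrite (_ : _ \o _ = (fun w => (X i w, Y i w))); last first.
    by apply/funext => w; rewrite /= tnth_mktuple.
  exact: measurable_fun_pair.
pose k := alpha * (n.+1)%:R.
pose E := fun j => [set t | (cnt s A t j)%:R <= k].
have mEj j : measurable (E j) := mE j k mA ms.
have mZE j : measurable (Z @^-1` E j).
  by rewrite -[X in measurable X]setTI; exact: mZ measurableT _ (mEj j).
have hChat : [set w | Chat s A Yset alpha
    [tuple (X (first i) w, Y (first i) w) | i < n]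
    (X ord_max w) (Y ord_max w)] = ~` (Z @^-1` E ord_max).
  apply/seteqP; split => w /=.
  - rewrite /Chat /= (pval_cnt s A (fun i => (X i w, Y i w))) => -[_].
    rewrite ltr_pdivlMr ?ltr0Sn // => h; rewrite /E /= -/(Z w).
    by rewrite leNgt h.
  - move=> hn; split; first exact: (hXY ord_max w).2.
    rewrite (pval_cnt s A (fun i => (X i w, Y i w))) ltr_pdivlMr ?ltr0Sn //.
    by rewrite ltNge; apply/negP.
have mChat : measurable [set w | Chat s A Yset alpha
    [tuple (X (first i) w, Y (first i) w) | i < n]
    (X ord_max w) (Y ord_max w)] by rewrite hChat; exact: measurableC.
split.
  apply: le_measure; rewrite ?inE //.
  by move=> w hw; exact: (det_part (hv w) hw).
have hPE j : P (Z @^-1` E j) = P (Z @^-1` E ord_max).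
  have := hex (tperm ord_max j) (E ord_max) (mEj ord_max) => <-.
  congr (P _); apply/seteqP; split => w /=.
  - have -> : [tuple (X (tperm ord_max j i) w, Y (tperm ord_max j i) w) | i < n.+1]
       = [tuple tnth (Z w) (tperm ord_max j i) | i < n.+1].
      by apply: eq_mktuple => i; rewrite tnth_mktuple.
    by rewrite /E /= cnt_perm // tpermL.
  - have -> : [tuple (X (tperm ord_max j i) w, Y (tperm ord_max j i) w) | i < n.+1]
       = [tuple tnth (Z w) (tperm ord_max j i) | i < n.+1].
      by apply: eq_mktuple => i; rewrite tnth_mktuple.
    by rewrite /E /= cnt_perm // tpermL.
have mI j : measurable_fun setT (fun w => (\1_(Z @^-1` E j) w : R)%:E).
  by apply: measurableT_comp.
have hsum : (\sum_(j < n.+1) P (Z @^-1` E j) <= k%:E)%E.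
  have -> : (\sum_(j < n.+1) P (Z @^-1` E j) =
      \int[P]_w (\sum_(j < n.+1) (\1_(Z @^-1` E j) w)%:E))%E.
    rewrite ge0_integral_sum //.
    by apply: eq_bigr => j _; rewrite integral_indic // setIT.
  apply: (@le_trans _ _ (\int[P]_w (cst k%:E) w)%E).
    apply: ge0_le_integral => //.
    - by move=> w _; apply: sume_ge0 => j _; rewrite lee_fin.
    - exact: emeasurable_sum.
    move=> w _; rewrite sumEFin lee_fin /=.
    apply: le_trans (comb (fun j => scf s A (Z w) j) _); last first.
      by rewrite /k mulr_ge0 // ltW.
    rewrite card_set_sum natr_sum; apply: ler_sum => j _.
    by rewrite indicE /in_mem /= /in_set /E /cnt /= asboolb.
  - rewrite integral_cst //.
    rewrite -[leRHS]mule1; apply: lee_wpmul2l; first by rewrite lee_fin /k mulr_ge0 // ltW.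
    exact: probability_le1.
have hp : (P (Z @^-1` E ord_max) *+ n.+1 <= k%:E)%E.
  move: hsum; rewrite (eq_bigr (fun=> P (Z @^-1` E ord_max))) //.
  by rewrite sumr_const card_ord.
rewrite hChat.
have := probability_setC P (mZE ord_max); move=> ->.
have p0 : (0 <= P (Z @^-1` E ord_max))%E by exact: measure_ge0.
have p1 : (P (Z @^-1` E ord_max) <= 1)%E by exact: probability_le1.
move: (P (Z @^-1` E ord_max)) p0 p1 hp => [p| |] // p0 p1 hp.
rewrite -EFin_natmul lee_fin /k -[p *+ _]mulr_natr ler_pM2r ?ltr0Sn // in hp.
rewrite -EFinB lee_fin; lra.
Qed.
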